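(* Let $X\in\mathbb{R}^{n\times p}$, $\beta_0\in\mathbb{R}^p$ with support $\{1,\dots,s\}$, $\lambda_0>0$, $\lambda>0$, $c_1\in[0,1)$ and $\kappa_0>0$. Assume $p_\lambda:[0,\infty)\to[0,\infty)$ is continuously differentiable on $(0,\infty)$, increasing and concave, with $p_\lambda(0)=0$, $p_\lambda(\infty)=\lim_{t\to\infty}p_\lambda(t)<\infty$, $p_\lambda'\{(1-c_1)\lambda\}\le\lambda_0/4$, and $\min_{1\le j\le s}|\beta_{0,j}|>\max\{(1-c_1)\lambda,\,2\kappa_0^{-1}p_\lambda^{1/2}(\infty)\}$. Assume $\min\{n^{-1/2}\|Xv\|_2:\|v\|_2=1,\|v\|_0<2s\}\ge\kappa_0$. Let $\widehat\beta\in\mathbb{R}^p$ be any vector each of whose components is either $0$ or of magnitude larger than $(1-c_1)\lambda$, and let $\delta=\widehat\beta-\beta_0$. Then $$\sum_{j=1}^p p_\lambda(|\beta_{0,j}|)-\sum_{j=1}^p p_\lambda(|\widehat\beta_j|)\le (4n)^{-1}\|X\delta\|_2^2+\tfrac14\lambda_0\|\delta\|_1.$$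
   Context: $\|v\|_0$ denotes the number of nonzero entries of $v$. *)

(* Defs.v *)
From Stdlib Require Import Reals.
Open Scope R_scope.

(* Vectors in R^m are functions nat -> R, only indices 0..m-1 matter
   (coordinate j+1 of the paper is index j here).  Matrices in R^{n x p}
   are functions nat -> nat -> R, entry (i,j) with i < n, j < p. *)

Fixpoint rsum (m : nat) (f : nat -> R) : R :=
  match m with
  | O => 0
  | S k => rsum k f + f k
  end.

Fixpoint l0norm (m : nat) (v : nat -> R) : nat :=
  match m with
  | O => O
  | S k => (l0norm k v + (if Req_EM_T (v k) 0 then 0 else 1))%nat
  end.

Definition l1norm (m : nat) (v : nat -> R) : R := rsum m (fun j => Rabs (v j)).
Definition sqnorm2 (m : nat) (v : nat -> R) : R := rsum m (fun j => v j * v j).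
Definition l2norm (m : nat) (v : nat -> R) : R := sqrt (sqnorm2 m v).

Definition matvec (p : nat) (X : nat -> nat -> R) (v : nat -> R) : nat -> R :=
  fun i => rsum p (fun j => X i j * v j).

(* Main.v *)
Require Import Defs.
From Stdlib Require Import Reals Lra Lia Psatz.
Open Scope R_scope.

Lemma rsum_le m f g : (forall j, (j < m)%nat -> f j <= g j) -> rsum m f <= rsum m g.
Proof. induction m; simpl; intros H; [lra|]. assert (f m <= g m) by (apply H; lia).
  assert (rsum m f <= rsum m g) by (apply IHm; intros; apply H; lia). lra. Qed.
Lemma rsum_ext m f g : (forall j, (j < m)%nat -> f j = g j) -> rsum m f = rsum m g.
Proof. induction m; simpl; intros H; [lra|]. rewrite (H m) by lia. rewrite IHm; auto. Qed.
Lemma rsum_plus m f g : rsum m (fun j => f j + g j) = rsum m f + rsum m g.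
Proof. induction m; simpl; [lra|]. rewrite IHm; lra. Qed.
Lemma rsum_minus m f g : rsum m (fun j => f j - g j) = rsum m f - rsum m g.
Proof. induction m; simpl; [lra|]. rewrite IHm; lra. Qed.
Lemma rsum_scal m k f : rsum m (fun j => k * f j) = k * rsum m f.
Proof. induction m; simpl; [lra|]. rewrite IHm; lra. Qed.
Lemma rsum_nonneg m f : (forall j, (j < m)%nat -> 0 <= f j) -> 0 <= rsum m f.
Proof. intros H. replace 0 with (rsum m (fun _ => 0)). apply rsum_le; auto.
  induction m; simpl; auto. rewrite IHm; [lra|]. intros; apply H; lia. Qed.
Lemma l0_INR m v : INR (l0norm m v) = rsum m (fun j => if Req_EM_T (v j) 0 then 0 else 1).
Proof. induction m; simpl; auto. rewrite plus_INR, IHm. destruct Req_EM_T; simpl; lra. Qed.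
Lemma l0_scal m k v : k <> 0 -> l0norm m (fun j => k * v j) = l0norm m v.
Proof. intros Hk. induction m; simpl; auto. rewrite IHm.
  destruct (Req_EM_T (k * v m) 0) as [e|e]; destruct (Req_EM_T (v m) 0) as [e'|e']; auto.
  - apply Rmult_integral in e; destruct e; contradiction.
  - exfalso; apply e; rewrite e'; ring. Qed.
Lemma rsum_ind_s p s : (s <= p)%nat -> rsum p (fun j => if (j <? s)%nat then 1 else 0) = INR s.
Proof. intros H. induction p; cbn [rsum].
  - replace s with 0%nat by lia. reflexivity.
  - destruct (Nat.eq_dec s (S p)).
    + subst s. replace (p <? S p)%nat with true by (symmetry; apply Nat.ltb_lt; lia).
      assert (rsum p (fun j => if (j <? S p)%nat then 1 else 0) = INR p).
      { clear. assert (forall q, (q <= p)%nat -> rsum q (fun j => if (j <? S p)%nat then 1 else 0) = INR q).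
        { induction q; intros Hq; cbn [rsum]; [reflexivity|]. rewrite IHq by lia.
          replace (q <? S p)%nat with true by (symmetry; apply Nat.ltb_lt; lia).
          rewrite S_INR; lra. }
        apply H; lia. }
      rewrite H0, S_INR; lra.
    + rewrite IHp by lia. replace (p <? s)%nat with false by (symmetry; apply Nat.ltb_ge; lia). lra.
Qed.
Section An.
Variable pen pen' : R -> R.
Hypothesis Hconc : forall x y t, 0 <= x -> 0 <= y -> 0 <= t <= 1 ->
             t * pen x + (1 - t) * pen y <= pen (t * x + (1 - t) * y).
Hypothesis Hincr : forall x y, 0 <= x -> x <= y -> pen x <= pen y.

Lemma chord x y z : 0 <= x -> x < y -> y < z ->
  (z - y) * pen x + (y - x) * pen z <= (z - x) * pen y.
Proof. intros. set (t := (z - y) / (z - x)).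
  assert (Ht : 0 <= t <= 1). { unfold t. split.
    - apply Rmult_le_pos; [lra| apply Rlt_le, Rinv_0_lt_compat; lra].
    - apply Rmult_le_reg_r with (z - x); [lra|]. unfold Rdiv. rewrite Rmult_assoc, Rinv_l by lra. lra. }
  assert (Hy : t * x + (1 - t) * z = y). { unfold t. field. lra. }
  pose proof (Hconc x z t H ltac:(lra) Ht) as Hc. rewrite Hy in Hc.
  assert (E1 : (z - y) = t * (z - x)). { unfold t. field. lra. }
  assert (E2 : (y - x) = (1 - t) * (z - x)). { unfold t. field. lra. }
  rewrite E1, E2. nra. Qed.

Lemma divle A B p q : 0 < p -> 0 < q -> B * p <= A * q -> B / q <= A / p.
Proof. intros. assert (B / q * (p * q) <= A / p * (p * q)).
  { replace (B / q * (p * q)) with (B * p) by (field; lra).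
    replace (A / p * (p * q)) with (A * q) by (field; lra). lra. }
  apply Rmult_le_reg_r with (p * q); nra. Qed.

Variable c : R.
Hypothesis Hc : 0 < c.
Hypothesis Hd : derivable_pt_lim pen c (pen' c).

Lemma slope_bound a b : c <= a -> a < b -> pen b - pen a <= pen' c * (b - a).
Proof. intros Ha Hab. set (m := (pen b - pen a) / (b - a)).
  assert (Hm : exists h0, 0 < h0 /\ forall h, 0 < h < h0 -> m <= (pen (c + h) - pen c) / h).
  { destruct (Req_dec a c) as [E|E].
    - subst a. exists (b - c). split; [lra|]. intros h Hh. unfold m. apply divle; try lra;
      pose proof (chord c (c+h) b ltac:(lra) ltac:(lra) ltac:(lra)). nra.
    - exists (a - c). split; [lra|]. intros h Hh.
      pose proof (chord c (c+h) a ltac:(lra) ltac:(lra) ltac:(lra)) as C1.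
      pose proof (chord (c+h) a b ltac:(lra) ltac:(lra) ltac:(lra)) as C2.
      apply Rle_trans with ((pen a - pen (c + h)) / (a - (c + h))).
      + unfold m. apply divle; try lra.
      + apply divle; try lra. }
  destruct Hm as [h0 [Hh0 Hm]].
  assert (m <= pen' c).
  { destruct (Rle_dec m (pen' c)) as [|N]; auto. exfalso.
    destruct (Hd (m - pen' c) ltac:(lra)) as [del Hdel].
    set (h := Rmin (del / 2) (h0 / 2)).
    assert (0 < h) by (unfold h; apply Rmin_pos; pose proof (cond_pos del); lra).
    assert (h <= del / 2) by apply Rmin_l. assert (h <= h0 / 2) by apply Rmin_r.
    pose proof (cond_pos del).
    specialize (Hdel h ltac:(lra) ltac:(rewrite Rabs_right; lra)).
    specialize (Hm h ltac:(lra)).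
    apply Rabs_def2 in Hdel. lra. }
  assert (pen b - pen a = m * (b - a)) by (unfold m; field; lra). nra. Qed.
End An.

Theorem mainTheorem6
  (n p s : nat) (X : nat -> nat -> R) (beta0 : nat -> R)
  (lambda0 lambda c1 kappa0 : R)
  (pen pen' : R -> R) (pinf : R) (betahat : nat -> R)
  (Hn : (0 < n)%nat)
  (Hsp : (s <= p)%nat)
  (Hsupp : forall j, (j < p)%nat -> (beta0 j <> 0 <-> (j < s)%nat))
  (Hl0 : 0 < lambda0) (Hl : 0 < lambda)
  (Hc1 : 0 <= c1 < 1) (Hk0 : 0 < kappa0)
  (Hnonneg : forall t, 0 <= t -> 0 <= pen t)
  (Hderiv : forall t, 0 < t -> derivable_pt_lim pen t (pen' t))
  (Hderivcont : forall t, 0 < t -> continuity_pt pen' t)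
  (Hincr : forall x y, 0 <= x -> x <= y -> pen x <= pen y)
  (Hconc : forall x y t, 0 <= x -> 0 <= y -> 0 <= t <= 1 ->
             t * pen x + (1 - t) * pen y <= pen (t * x + (1 - t) * y))
  (Hpen0 : pen 0 = 0)
  (Hlim : forall eps, 0 < eps -> exists M, forall t, M < t -> Rabs (pen t - pinf) < eps)
  (Hderivbound : pen' ((1 - c1) * lambda) <= lambda0 / 4)
  (Hmin : forall j, (j < s)%nat ->
            Rmax ((1 - c1) * lambda) (2 / kappa0 * sqrt pinf) < Rabs (beta0 j))
  (HRE : forall v : nat -> R, l2norm p v = 1 -> (l0norm p v < 2 * s)%nat ->
            kappa0 <= / sqrt (INR n) * l2norm n (matvec p X v))
  (Hhat : forall j, (j < p)%nat -> betahat j = 0 \/ (1 - c1) * lambda < Rabs (betahat j)) :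
  let delta := fun j => betahat j - beta0 j in
  rsum p (fun j => pen (Rabs (beta0 j))) - rsum p (fun j => pen (Rabs (betahat j)))
    <= / (4 * INR n) * sqnorm2 n (matvec p X delta) + / 4 * lambda0 * l1norm p delta.
Proof.
  intros delta. set (c := (1 - c1) * lambda) in *.
  assert (Hc : 0 < c) by (unfold c; nra).
  set (Q := sqnorm2 n (matvec p X delta)).
  assert (HQ : 0 <= Q) by (apply rsum_nonneg; intros; nra).
  assert (Hnr : 0 < INR n) by (apply lt_0_INR; lia).
  assert (Hle_inf : forall t, 0 <= t -> pen t <= pinf).
  { intros t Ht. destruct (Rle_dec (pen t) pinf) as [|N]; auto. exfalso.
    destruct (Hlim (pen t - pinf) ltac:(lra)) as [M HM].
    specialize (HM (Rmax t M + 1) ltac:(pose proof (Rmax_r t M); lra)).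
    pose proof (Hincr t (Rmax t M + 1) Ht ltac:(pose proof (Rmax_l t M); lra)).
    apply Rabs_def2 in HM. lra. }
  assert (Hpinf : 0 <= pinf) by (rewrite <- Hpen0; apply Hle_inf; lra).
  assert (Lip : forall a b, c <= a -> c <= b -> pen b - pen a <= lambda0 / 4 * Rabs (b - a)).
  { intros a b Ha Hb. destruct (Rle_lt_dec b a).
    - pose proof (Hincr b a ltac:(lra) r). pose proof (Rabs_pos (b - a)). nra.
    - pose proof (slope_bound pen pen' Hconc c Hc (Hderiv c Hc) a b Ha ltac:(lra)).
      rewrite Rabs_right by (apply Rle_ge, Rlt_le, Rgt_minus; exact r). nra. }
  assert (Hl1 : rsum p (fun j => lambda0 / 4 * Rabs (delta j)) = / 4 * lambda0 * l1norm p delta).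
  { unfold l1norm. rewrite rsum_scal. field. }
  rewrite <- rsum_minus.
  assert (Tsupp : forall j, (j < p)%nat -> (j < s)%nat -> betahat j <> 0 ->
     pen (Rabs (beta0 j)) - pen (Rabs (betahat j)) <= lambda0 / 4 * Rabs (delta j)).
  { intros j Hj Hjs Hb. destruct (Hhat j Hj) as [|Hb']; [contradiction|].
    pose proof (Hmin j Hjs). pose proof (Rmax_l c (2 / kappa0 * sqrt pinf)).
    eapply Rle_trans. apply Lip; lra.
    apply Rmult_le_compat_l; [lra|]. unfold delta.
    rewrite Rabs_minus_sym. apply Rabs_triang_inv2. }
  assert (Toff : forall j, (j < p)%nat -> ~ (j < s)%nat -> beta0 j = 0).
  { intros j Hj Hjs. destruct (Req_dec (beta0 j) 0); auto. exfalso. apply Hjs, Hsupp; auto. }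
  destruct (Compare_dec.lt_dec (l0norm p delta) (2 * s)) as [Hsmall|Hbig].
  -
    assert (Hq : kappa0 * kappa0 / 4 * sqnorm2 p delta <= / (4 * INR n) * Q).
    { set (L2 := sqnorm2 p delta).
      assert (HL2 : 0 <= L2) by (apply rsum_nonneg; intros; nra).
      destruct (Req_dec L2 0) as [E|E].
      { rewrite E. apply Rle_trans with 0; [lra|]. apply Rmult_le_pos; [|auto].
        apply Rlt_le, Rinv_0_lt_compat; lra. }
      set (L := sqrt L2). assert (HL : 0 < L) by (apply sqrt_lt_R0; lra).
      assert (HLL : L * L = L2) by (apply sqrt_sqrt; lra).
      set (k := / L). assert (Hk : 0 < k) by (apply Rinv_0_lt_compat; lra).
      set (v := fun j => k * delta j).
      assert (Hsv : sqnorm2 p v = k * k * L2).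
      { unfold L2, sqnorm2, v. rewrite <- rsum_scal. apply rsum_ext; intros; ring. }
      assert (Hmv : sqnorm2 n (matvec p X v) = k * k * Q).
      { unfold Q, sqnorm2. rewrite <- rsum_scal. apply rsum_ext; intros i _.
        unfold matvec, v. replace (rsum p (fun j => X i j * (k * delta j))) with
          (k * rsum p (fun j => X i j * delta j)) by (rewrite <- rsum_scal; apply rsum_ext; intros; ring).
        ring. }
      assert (Hv1 : l2norm p v = 1).
      { unfold l2norm. rewrite Hsv. replace (k * k * L2) with 1. apply sqrt_1.
        rewrite <- HLL. unfold k. field. lra. }
      assert (Hv0 : (l0norm p v < 2 * s)%nat) by (unfold v; rewrite l0_scal; lra || auto).
      specialize (HRE v Hv1 Hv0). unfold l2norm in HRE. rewrite Hmv in HRE.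
      rewrite sqrt_mult in HRE by nra. rewrite sqrt_square in HRE by lra.
      assert (Hsn : 0 < sqrt (INR n)) by (apply sqrt_lt_R0; lra).
      assert (Hsq : kappa0 * sqrt (INR n) * L <= sqrt Q).
      { apply Rmult_le_compat_r with (r := sqrt (INR n) * L) in HRE; [|nra].
        replace (/ sqrt (INR n) * (k * sqrt Q) * (sqrt (INR n) * L)) with (sqrt Q) in HRE
          by (unfold k; field; lra). lra. }
      assert (HsqQ : sqrt Q * sqrt Q = Q) by (apply sqrt_sqrt; lra).
      assert (HsnN : sqrt (INR n) * sqrt (INR n) = INR n) by (apply sqrt_sqrt; lra).
      assert (kappa0 * kappa0 * INR n * L2 <= Q).
      { rewrite <- HsqQ, <- HsnN, <- HLL.
        assert (0 <= kappa0 * sqrt (INR n) * L) by (apply Rmult_le_pos; [apply Rmult_le_pos|]; apply Rlt_le; assumption). pose proof (Rmult_le_compat _ _ _ _ H H Hsq Hsq). nra. }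
      apply Rmult_le_reg_l with (4 * INR n); [lra|].
      replace (4 * INR n * (/ (4 * INR n) * Q)) with Q by (field; lra). nra. }
    eapply Rle_trans with (rsum p (fun j => lambda0 / 4 * Rabs (delta j) + kappa0 * kappa0 / 4 * (delta j * delta j))).
    + apply rsum_le. intros j Hj. pose proof (Rabs_pos (delta j)).
      assert (0 <= delta j * delta j) by nra.
      destruct (Compare_dec.lt_dec j s) as [Hjs|Hjs].
      * destruct (Req_dec (betahat j) 0) as [Hb|Hb].
        -- rewrite Hb, Rabs_R0, Hpen0. pose proof (Hle_inf (Rabs (beta0 j)) (Rabs_pos _)).
           pose proof (Hmin j Hjs). pose proof (Rmax_r c (2 / kappa0 * sqrt pinf)).
           assert (delta j * delta j = Rabs (beta0 j) * Rabs (beta0 j)).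
           { unfold delta. rewrite Hb, <- Rabs_mult. rewrite Rabs_right; [ring|nra]. }
           assert (pinf <= kappa0 * kappa0 / 4 * (delta j * delta j)).
           { rewrite H4. assert (0 <= 2 / kappa0 * sqrt pinf).
             { apply Rmult_le_pos; [apply Rlt_le; unfold Rdiv; apply Rmult_lt_0_compat; [lra|apply Rinv_0_lt_compat; lra]|apply sqrt_pos]. }
             assert ((2 / kappa0 * sqrt pinf) * (2 / kappa0 * sqrt pinf) <= Rabs (beta0 j) * Rabs (beta0 j)) by (nra).
             replace ((2 / kappa0 * sqrt pinf) * (2 / kappa0 * sqrt pinf)) with (4 / (kappa0 * kappa0) * (sqrt pinf * sqrt pinf)) in H6 by (field; lra).
             rewrite sqrt_sqrt in H6 by lra.
             apply Rmult_le_compat_l with (r := kappa0 * kappa0 / 4) in H6; [|nra].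
             replace (kappa0 * kappa0 / 4 * (4 / (kappa0 * kappa0) * pinf)) with pinf in H6 by (field; lra). lra. }
           nra.
        -- pose proof (Tsupp j Hj Hjs Hb). nra.
      * rewrite (Toff j Hj Hjs), Rabs_R0, Hpen0. pose proof (Hnonneg _ (Rabs_pos (betahat j))). nra.
    + rewrite rsum_plus, Hl1. rewrite rsum_scal. fold (sqnorm2 p delta). lra.
  -
    set (a := fun j => if (j <? s)%nat then (if Req_EM_T (betahat j) 0 then 1 else 0) else 0).
    set (o := fun j => if (j <? s)%nat then 0 else (if Req_EM_T (betahat j) 0 then 0 else 1)).
    assert (Hcount : rsum p a <= rsum p o).
    { assert (rsum p a <= INR s).
      { rewrite <- (rsum_ind_s p s Hsp). apply rsum_le; intros j _. unfold a.
        destruct (j <? s)%nat; [destruct Req_EM_T|]; lra. }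
      assert (2 * INR s <= INR s + rsum p o).
      { replace (2 * INR s) with (INR (2 * s)) by (rewrite mult_INR; simpl; lra).
        apply Rle_trans with (INR (l0norm p delta)). apply le_INR; lia.
        rewrite l0_INR, <- (rsum_ind_s p s Hsp), <- rsum_plus. apply rsum_le; intros j Hj.
        unfold o. destruct (Nat.ltb_spec j s) as [Hjs|Hjs].
        - destruct Req_EM_T; lra.
        - assert (delta j = betahat j) by (unfold delta; rewrite (Toff j Hj ltac:(lia)); ring).
          rewrite H0. destruct Req_EM_T; lra. }
      lra. }
    assert (Hpc : 0 <= pen c) by (apply Hnonneg; lra).
    eapply Rle_trans with (rsum p (fun j => lambda0 / 4 * Rabs (delta j) + pen c * (a j - o j))).
    + apply rsum_le. intros j Hj. pose proof (Rabs_pos (delta j)). unfold a, o.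
      destruct (Nat.ltb_spec j s) as [Hjs|Hjs].
      * destruct (Req_EM_T (betahat j) 0) as [Hb|Hb].
        -- rewrite Hb, Rabs_R0, Hpen0. pose proof (Hmin j Hjs). pose proof (Rmax_l c (2 / kappa0 * sqrt pinf)).
           pose proof (Lip c (Rabs (beta0 j)) ltac:(lra) ltac:(lra)) as HL.
           assert (Rabs (beta0 j) - c >= 0). { lra. } rewrite (Rabs_right (Rabs (beta0 j) - c)) in HL by assumption. 
           assert (Rabs (delta j) = Rabs (beta0 j)) by (unfold delta; rewrite Hb, <- Rabs_Ropp; f_equal; ring).
           nra.
        -- pose proof (Tsupp j Hj Hjs Hb). lra.
      * rewrite (Toff j Hj ltac:(lia)), Rabs_R0, Hpen0.
        destruct (Req_EM_T (betahat j) 0) as [Hb|Hb].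
        -- rewrite Hb, Rabs_R0, Hpen0. nra.
        -- destruct (Hhat j Hj) as [|Hb']; [contradiction|].
           pose proof (Hincr c (Rabs (betahat j)) ltac:(lra) ltac:(lra)). nra.
    + rewrite rsum_plus, Hl1, rsum_scal, rsum_minus.
      assert (0 <= / (4 * INR n) * Q) by (apply Rmult_le_pos; [apply Rlt_le, Rinv_0_lt_compat; lra|auto]).
      nra.
Qed.
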